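(* Let $X=\{x_1<\dots<x_r\} \subseteq Z=\{z_1<\dots<z_m\}$ be two sets of positive integers. For an integer $y$, let \[ \nu(y) = \#\{z\in Z\mid z\geq y\} + \#\{x\in X\mid x\leq y\}, \] and for a set $Y$, $\nu(Y) = \sum_{y\in Y} \nu(y)$. For $r\leq s\leq m$, let \[ \Sigma_s(X,Z) = \sum_{X\subseteq Y\subseteq Z,\ |Y|=s} q^{\nu(Y)}. \] Then \[ \Sigma_s(X,Z) = q^{\nu(X) + (r+1)(s-r)+\binom{s-r}{2}} \left[\begin{matrix} m-r\\ s-r\end{matrix}\right]_q . \]
   Context: $\left[\begin{matrix} a\\ b\end{matrix}\right]_q$ denotes the Gaussian $q$-binomial coefficient. *)

(* Defs.v *)
From HB Require Import structures.
From mathcomp Require Import all_boot all_order all_algebra.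
From mathcomp Require Import finmap.
Set Implicit Arguments. Unset Strict Implicit. Unset Printing Implicit Defensive.
Import GRing.Theory.
Local Open Scope ring_scope.
Local Open Scope fset_scope.

Fixpoint qbinom (R : comRingType) (q : R) (n k : nat) : R :=
  match n, k with
  | O, O => 1
  | O, S _ => 0
  | S _, O => 1
  | S n', S k' => qbinom q n' k' + q ^+ k * qbinom q n' k
  end.

Definition nu (X Z : {fset nat}) (y : nat) : nat :=
  (#|` [fset z in Z | (y <= z)%N]| + #|` [fset x in X | (x <= y)%N]|)%N.

Definition nuS (X Z Y : {fset nat}) : nat := (\sum_(y <- Y) nu X Z y)%N.

Definition Sigma (R : comRingType) (q : R) (X Z : {fset nat}) (s : nat) : R :=
  \sum_(Y <- fpowerset Z | (X `<=` Y) && (#|` Y| == s)) q ^+ nuS X Z Y.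

(* Main.v *)
Require Import Defs.
From HB Require Import structures.
From mathcomp Require Import all_boot all_order all_algebra.
From mathcomp Require Import finmap.
From mathcomp Require Import zify ring.
Set Implicit Arguments. Unset Strict Implicit.
Import GRing.Theory.
Local Open Scope ring_scope.
Local Open Scope fset_scope.

Local Open Scope ring_scope.
Section S.
Variable (R : comRingType) (q : R).

Lemma split_pow (D : {fset nat}) a (F : {fset nat} -> R) : a \in D ->
  \sum_(W <- fpowerset D) F W =
  \sum_(W <- fpowerset (D `\ a)) F W + \sum_(W <- fpowerset (D `\ a)) F (a |` W).
Proof.
move=> aD; rewrite (big_fsetID _ (fun W : {fset nat} => a \notin W)); congr (_ + _).
  apply: eq_fbigl => W; rewrite !inE /= !fpowersetE fsubsetD1.
  by [].
have -> : [fset x in fpowerset D | ~~ (a \notin x)] =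
          [fset a |` W | W in fpowerset (D `\ a)].
  apply/fsetP => Y; rewrite !inE /=; apply/andP/imfsetP.
    rewrite fpowersetE negbK => -[YD aY]; exists (Y `\ a); last by rewrite fsetD1K.
    rewrite /= fpowersetE fsubsetD1 !inE eqxx andbT; apply/fsubsetP=> x; rewrite !inE => /andP[_ /(fsubsetP YD)]//.
  move=> [W] WP ->; move: WP; rewrite inE fpowersetE fsubsetD1 => /andP[WD aW].
  split; last by rewrite !inE eqxx.
  rewrite fpowersetE fsubUset fsub1set aD WD //.
rewrite big_imfset //= => W1 W2; rewrite /= !fpowersetE !fsubsetD1 => /andP[_ a1] /andP[_ a2] E.
by rewrite -(fsetU1K a1) E fsetU1K.
Qed.

Lemma max_seq (s : seq nat) x : x \in s -> exists2 a, a \in s & forall d, d \in s -> (d <= a)%N.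
Proof.
elim: s x => // y s IH x _; case: s IH => [|z s'] IH.
  by exists y; rewrite ?mem_head // => d; rewrite inE => /eqP ->.
have [a aS aM] := IH z (mem_head _ _).
case: (leqP y a) => h; [exists a | exists y].
- by rewrite inE aS orbT.
- move=> d; rewrite inE => /orP[/eqP ->|/aM //]; done.
- by rewrite mem_head.
- move=> d; rewrite inE => /orP[/eqP ->|/aM hd] //; exact: (leq_trans hd (ltnW h)).
Qed.

Definition g (D : {fset nat}) (c w : nat) : nat := (c - #|`[fset d in D | (d < w)%N]|)%N.

Lemma qbinom0 n : qbinom q n 0 = 1.
Proof. by case: n. Qed.

Lemma key n : forall D : {fset nat}, #|`D| = n -> forall c k, (n <= c)%N ->
 \sum_(W <- fpowerset D) (if #|`W| == k then q ^+ (\sum_(w <- W) g D c w)%N else 0)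
  = q ^+ ((c - n + 1) * k + 'C(k, 2))%N * qbinom q n k.
Proof.
elim: n => [|n IH] D hD c k hc.
  rewrite (cardfs0_eq hD) fpowerset0 big_seq_fset1 cardfs0 big_seq_fset0.
  by case: k => [|k] /=; rewrite ?mulr0 // muln0 /= expr0 mulr1.
have /fset0Pn [x xD] : D != fset0 by apply/eqP => E; rewrite E cardfs0 in hD.
have [a aD amax] := max_seq xD.
set D' := D `\ a.
have hD' : #|`D'| = n by move: hD; rewrite (cardfsD1 a D) aD => -[].
have gD w : w \in D' -> g D c w = g D' c w.
  move=> wD'; rewrite /g; congr (_ - _)%N; congr (#|` _|); apply/fsetP => d.
  rewrite !inE; case: (d =P a) => //= -> ; case: (a \in D) => //=.
  have := amax w; rewrite !inE in wD'; case/andP: wD' => _ /amax; lia.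
have ga : g D c a = (c - n)%N.
  rewrite /g -hD'; congr (_ - _)%N; congr (#|` _|); apply/fsetP => d.
  rewrite !inE; case: (boolP (d \in D)) => dD; rewrite ?andbF ?andbT //.
  have := amax d dD; lia.
rewrite (split_pow _ aD) -/D'.
have E1 : \sum_(W <- fpowerset D') (if #|` W| == k then q ^+ (\sum_(w <- W) g D c w)%N else 0)
   = \sum_(W <- fpowerset D') (if #|` W| == k then q ^+ (\sum_(w <- W) g D' c w)%N else 0).
  apply: eq_fbigr => W; rewrite fpowersetE => WD _; congr (if _ then _ ^+ _ else _).
  by apply: eq_fbigr => w wW _; apply: gD; apply: (fsubsetP WD).
have E2 : \sum_(W <- fpowerset D') (if #|` a |` W| == k then q ^+ (\sum_(w <- a |` W) g D c w)%N else 0)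
   = \sum_(W <- fpowerset D') (if #|` W|.+1 == k then q ^+ (c - n) * q ^+ (\sum_(w <- W) g D' c w)%N else 0).
  apply: eq_fbigr => W; rewrite fpowersetE => WD _.
  have aW : a \notin W by apply/negP => /(fsubsetP WD); rewrite !inE eqxx.
  rewrite cardfsU1 aW big_fsetU1 //= ga exprD; congr (if _ then _ * _ ^+ _ else _).
  by apply: eq_fbigr => w wW _; apply: gD; apply: (fsubsetP WD).
rewrite E1 E2 IH //; last by lia.
clear E1 E2.
case: k => [|k].
  rewrite big1_fset ?addr0 ?qbinom0 //.
  by rewrite !muln0.
have E3 : \sum_(W <- fpowerset D') (if #|` W|.+1 == k.+1 then q ^+ (c - n) * q ^+ (\sum_(w <- W) g D' c w)%N else 0)
  = \sum_(W <- fpowerset D') q ^+ (c - n) * (if #|` W| == k then q ^+ (\sum_(w <- W) g D' c w)%N else 0).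
  by apply: eq_bigr => W _; rewrite eqSS; case: ifP; rewrite ?mulr0.
rewrite E3; clear E3.
rewrite -mulr_sumr IH //; last by lia.
rewrite /= mulrDr addrC; congr (_ + _); rewrite !mulrA -!exprD; congr (_ ^+ _ * _); rewrite binS bin1; nia.
Qed.

Lemma cardE' (A : {fset nat}) (P : pred nat) :
  #|`[fset x in A | P x]| = (\sum_(x <- A | P x) 1)%N.
Proof. by rewrite card_fset_sum1 -big_fset_condE. Qed.

Lemma nuD (X Z : {fset nat}) y : X `<=` Z -> y \in Z `\` X ->
  nu X Z y = g (Z `\` X) #|`Z| y.
Proof.
move=> XZ; rewrite inE => /andP[yX yZ].
rewrite /nu /g !cardE' card_fset_sum1.
have H1 : (\sum_(i <- Z) 1 = \sum_(i <- Z | (y <= i)%N) 1 + \sum_(i <- Z | ~~ (y <= i)%N) 1)%N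
  by rewrite [LHS](bigID (fun z => y <= z)%N).
have H2 : (\sum_(i <- Z | ~~ (y <= i)%N) 1 = \sum_(i <- Z | ~~ (y <= i)%N && (i \in X)) 1
      + \sum_(i <- Z | ~~ (y <= i)%N && (i \notin X)) 1)%N
  by rewrite [LHS](bigID (fun z => z \in X)).
rewrite H1 H2.
have -> : (\sum_(i <- Z | ~~ (y <= i)%N && (i \in X)) 1 = \sum_(x <- X | (x <= y)%N) 1)%N.
  apply: eq_fbigl_cond => z; rewrite !inE /=; case: (boolP (z \in X)) => zX /=; rewrite ?andbF //.
  have zy : z != y by apply: contraNneq yX => <-.
  have -> : (z \in [eta mem_seq Z]) = true by exact: (fsubsetP XZ _ zX).
  by rewrite /= -ltnNge ltn_neqAle zy andbT.
have -> : (\sum_(i <- Z | ~~ (y <= i)%N && (i \notin X)) 1 = \sum_(x <- Z `\` X | (x < y)%N) 1)%N.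
  apply: eq_fbigl_cond => z; rewrite !inE /=; case: (boolP (z \in X)) => zX /=; rewrite ?andbF //.
  by rewrite ltnNge andbT.
lia.
Qed.

Lemma main_aux (X Z : {fset nat}) (s : nat) :
  (forall z, z \in Z -> (0 < z)%N) ->
  X `<=` Z ->
  (#|` X| <= s)%N -> (s <= #|` Z|)%N ->
  Sigma q X Z s =
  q ^+ (nuS X Z X + (#|` X|).+1 * (s - #|` X|) + 'C(s - #|` X|, 2))%N
    * qbinom q (#|` Z| - #|` X|) (s - #|` X|).
Proof.
move=> _ XZ rs sm.
set r := #|` X|; set m := #|` Z|; set D := Z `\` X.
have hDc : #|` D| = (m - r)%N by rewrite /D cardfsDS.
have DK W : W `<=` D -> (X `|` W) `\` X = W.
  move=> WD; apply/fsetP => x; rewrite !inE; case: (boolP (x \in X)) => xX //=.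
  apply/esym/negP => /(fsubsetP WD); rewrite !inE xX.
  done.
rewrite /Sigma.
have -> : \sum_(Y <- fpowerset Z | (X `<=` Y) && (#|`Y| == s)) q ^+ nuS X Z Y
   = \sum_(Y <- [fset X `|` W | W in fpowerset D] | #|`Y| == s) q ^+ nuS X Z Y.
  apply: eq_fbigl_cond => Y; rewrite !inE /=; case: (#|` Y| == s); rewrite ?andbF ?andbT //.
  apply/andP/imfsetP.
    rewrite fpowersetE => -[YZ XY]; exists (Y `\` X).
      rewrite fpowersetE; apply/fsubsetP => x; rewrite !inE => /andP[-> /(fsubsetP YZ) ->] //.
    apply/fsetP => x; rewrite !inE; case: (boolP (x \in X)) => xX //=.
    by rewrite (fsubsetP XY).
  move=> [W]; rewrite /= fpowersetE => WD ->.
  rewrite fpowersetE fsubUset XZ fsubsetUl; split => //.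
  by apply: fsubset_trans WD _; rewrite /D fsubDset fsubsetUr.
rewrite big_mkcond big_imfset /=; last first.
  move=> W1 W2; rewrite /= !fpowersetE => W1D W2D E.
  by rewrite -(DK _ W1D) E DK.
transitivity (\sum_(W <- fpowerset D) q ^+ nuS X Z X *
   (if #|` W| == (s - r)%N then q ^+ (\sum_(w <- W) g D m w)%N else 0)).
  apply: eq_fbigr => W; rewrite fpowersetE => WD _.
  have XW : X `&` W = fset0.
    apply/fsetP => x; rewrite !inE; apply/negP => /andP[xX /(fsubsetP WD)]; rewrite !inE xX.
    done.
  have cW : #|` X `|` W| = (r + #|`W|)%N by have := cardfsUI X W; rewrite XW cardfs0 addn0.
  have nW : nuS X Z (X `|` W) = (nuS X Z X + \sum_(w <- W) g D m w)%N.
    rewrite /nuS (big_fsetID _ (fun y : nat => y \in X)) /=; congr (_ + _)%N.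
      by apply: eq_fbigl => x; rewrite !inE; case: (boolP (x \in X)); rewrite /= ?andbF ?andbT ?orbT.
    apply: eq_fbig => x.
      rewrite !inE; case: (boolP (x \in X)) => xX; rewrite /= ?andbF ?andbT ?orbT //=.
        apply/esym/negP => /(fsubsetP WD); rewrite !inE xX; done.
    rewrite !inE => /andP[+ xX]; rewrite (negbTE xX) /= => xW; rewrite /D /m nuD //; exact: (fsubsetP WD).
  rewrite cW nW exprD.
  have -> : (r + #|`W| == s) = (#|`W| == s - r)%N by apply/eqP/eqP; lia.
  by case: ifP; rewrite ?mulr0.
rewrite -mulr_sumr (key hDc); last by lia.
rewrite mulrA -exprD; congr (_ ^+ _ * _).
have -> : (m - (m - r) + 1 = r.+1)%N by lia.
lia.
Qed.

End S.

Unset Implicit Arguments.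
Local Open Scope fset_scope.

Theorem mainTheorem15 (R : comRingType) (q : R) (X Z : {fset nat}) (s : nat) :
  (forall z, z \in Z -> (0 < z)%N) ->
  X `<=` Z ->
  (#|` X| <= s)%N -> (s <= #|` Z|)%N ->
  Sigma q X Z s =
  q ^+ (nuS X Z X + (#|` X|).+1 * (s - #|` X|) + 'C(s - #|` X|, 2))%N
    * qbinom q (#|` Z| - #|` X|) (s - #|` X|).
Proof. exact: main_aux. Qed.
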